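(* The $C$-shaped supergrid graph $C(m,n;k,l;c,d)$ contains a Hamiltonian cycle if and only if neither $a=m-k=1$ nor there exists a vertex $w$ of $C(m,n;k,l;c,d)$ with $\deg(w)=1$.
   Context: A supergrid graph is a finite vertex-induced subgraph of the infinite graph on integer points of the plane in which two vertices are adjacent iff their x- and y-coordinates each differ by at most 1. $R(m,n)$ denotes the rectangular supergrid graph on vertices $(x,y)$ with $1\le x\le m$, $1\le y\le n$. The $C$-shaped supergrid graph $C(m,n;k,l;c,d)$ is obtained from $R(m,n)$ by removing a subgraph $R(k,l)$ starting at the node $(m,c+1)$, such that $R(m,n)$ and $R(k,l)$ share exactly one border side, where $m\ge 2$, $n\ge 3$, $k,l\ge 1$, $c\ge 1$, $d=n-l-c\ge 1$, and $a=m-k\ge 1$. *)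

(* Defs.v *)
From mathcomp Require Import all_boot.
Set Implicit Arguments. Unset Strict Implicit. Unset Printing Implicit Defensive.

Definition point := (nat * nat)%type.

Definition sg_adj (u v : point) : bool :=
  [&& u != v,
      (u.1 <= v.1.+1) && (v.1 <= u.1.+1) &
      (u.2 <= v.2.+1) && (v.2 <= u.2.+1)].

(* A (finite) supergrid graph given by its vertex list (assumed duplicate-free);
   edges are induced by sg_adj. *)
Definition degree (V : seq point) (w : point) : nat := count (sg_adj w) V.

Definition hamiltonian_cycle (V : seq point) (s : seq point) : Prop :=
  [/\ uniq s, perm_eq s V, 3 <= size s & cycle sg_adj s].

Definition has_hamiltonian_cycle (V : seq point) : Prop :=
  exists s, hamiltonian_cycle V s.

Definition in_rect (m n : nat) (p : point) : bool :=
  (1 <= p.1 <= m) && (1 <= p.2 <= n).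

(* Removed rectangle R(k,l) placed with corner node (m, c+1), sharing the
   right border side x = m of R(m,n): x in [m-k+1, m], y in [c+1, c+l]. *)
Definition in_removed (m k l c : nat) (p : point) : bool :=
  (m - k < p.1 <= m) && (c < p.2 <= c + l).

(* Vertex list of C(m,n;k,l;c,d) (d = n-l-c is determined). *)
Definition C_vertices (m n k l c : nat) : seq point :=
  [seq p <- [seq (x, y) | x <- iota 1 m, y <- iota 1 n]
     | ~~ in_removed m k l c p].

(* Main.v *)
Require Import Defs.
From mathcomp Require Import all_boot zify.
Set Implicit Arguments. Unset Strict Implicit. Unset Printing Implicit Defensive.

Lemma sg_adjE x1 y1 x2 y2 : sg_adj (x1,y1) (x2,y2) =
  [&& (x1 != x2) || (y1 != y2), (x1 <= x2.+1) && (x2 <= x1.+1) &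
      (y1 <= y2.+1) && (y2 <= y1.+1)].
Proof. by rewrite /sg_adj xpair_eqE negb_and. Qed.

Lemma sg_adj_sym u v : sg_adj u v = sg_adj v u.
Proof. case: u => x1 y1; case: v => x2 y2; rewrite !sg_adjE; lia. Qed.

Definition HP (P : pred point) (a b : point) : Prop :=
  exists t, [/\ uniq (a :: t), (forall p, (p \in a :: t) = P p),
                path sg_adj a t & last a t = b].

Lemma HP_extE P Q a b : (forall p, P p = Q p) -> HP P a b -> HP Q a b.
Proof. move=> E [t [u m pt l]]; exists t; split=> // p; by rewrite m E. Qed.
Lemma HP_ext P Q a b : HP P a b -> (forall p, P p = Q p) -> HP Q a b.
Proof. by move=> h E; apply: HP_extE h. Qed.

Lemma HP1 a : HP (pred1 a) a a.
Proof. exists [::]; split=> // p; by rewrite inE. Qed.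

Lemma HP_cat P Q a b c d : HP P a b -> HP Q c d ->
  (forall p, P p -> Q p -> False) -> sg_adj b c ->
  HP (fun p => P p || Q p) a d.
Proof.
move=> [t1 [u1 m1 p1 l1]] [t2 [u2 m2 p2 l2]] dis bc.
exists (t1 ++ c :: t2); split.
- rewrite -cat_cons cat_uniq u1 u2 andbT.
  apply/hasPn => p; rewrite m2 => Qp; rewrite m1; apply/negP => Pp.
  exact: dis Pp Qp.
- by move=> p; rewrite -cat_cons mem_cat m1 m2.
- by rewrite cat_path p1 /= l1 bc p2.
- by rewrite last_cat /= l2.
Qed.

Lemma HP_rev P a b : HP P a b -> HP P b a.
Proof.
move=> [t [u m pt l]].
have E : b :: rev (belast a t) = rev (a :: t).
  by rewrite [a :: t]lastI rev_rcons l.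
exists (rev (belast a t)); split.
- by rewrite E rev_uniq.
- by move=> p; rewrite E mem_rev m.
- rewrite -l rev_path; rewrite (@eq_path _ _ sg_adj) // => x y; exact: sg_adj_sym.
- have := E; rewrite rev_cons => E'.
  have -> : last b (rev (belast a t)) = last a (b :: rev (belast a t)) by [].
  by rewrite E' last_rcons.
Qed.

Definition swp (p : point) : point := (p.2, p.1).
Lemma swpK : involutive swp. Proof. by case. Qed.

Lemma HP_swap P a b : HP P a b -> HP (fun p => P (swp p)) (swp a) (swp b).
Proof.
move=> [t [u m pt l]]; exists (map swp t); split.
- by rewrite -map_cons (map_inj_uniq (inv_inj swpK)).
- move=> p; rewrite -map_cons -{1}(swpK p) (mem_map (inv_inj swpK)); exact: m.
- rewrite path_map; apply: sub_path pt => x y.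
  by case: x => x1 y1; case: y => x2 y2; rewrite /relpre /swp /= !sg_adjE; lia.
- by rewrite last_map l.
Qed.

Definition rect x0 x1 y0 y1 : pred point :=
  fun p => (x0 <= p.1 <= x1) && (y0 <= p.2 <= y1).

Ltac pt := let x := fresh "x" in let y := fresh "y" in
  case=> x y; unfold rect in *; try rewrite /pred1; rewrite /= ?xpair_eqE /=; lia.

Ltac fin := first [pt | (rewrite sg_adjE; lia) | (move=> [? ?]; rewrite /pred1 /= ?xpair_eqE; lia)].

Lemma col_up x y0 n : HP (rect x x y0 (y0 + n)) (x, y0) (x, y0 + n).
Proof.
elim: n => [|n IH].
  rewrite addn0; apply: HP_ext (HP1 (x, y0)) _; pt.
rewrite addnS; apply: HP_ext (HP_cat IH (HP1 (x, (y0 + n).+1)) _ _) _.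
all: fin.
Qed.

Lemma zig x0 x1 y0 n : (x1 = x0.+1 \/ x0 = x1.+1) ->
  HP (fun p => ((p.1 == x0) || (p.1 == x1)) && (y0 <= p.2 <= y0 + n))
     (x0, y0) (x1, y0 + n).
Proof.
move=> hx.
have two : forall y : nat, HP (fun p => ((p.1 == x0) || (p.1 == x1)) && (p.2 == y))
                      (x0, y) (x1, y).
  { move=> y; apply: HP_ext (HP_cat (HP1 (x0,y)) (HP1 (x1,y)) _ _) _; fin. }
elim: n => [|n IH].
  rewrite addn0; apply: HP_ext (two y0) _; pt.
rewrite addnS; apply: HP_ext (HP_cat IH (two (y0 + n).+1) _ _) _.
all: fin.
Qed.

Lemma vfam n : forall x0 y0 y1, y0 <= y1 ->
  [/\ HP (rect x0 (x0 + n) y0 y1) (x0, y0) (x0 + n, y1),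
      HP (rect x0 (x0 + n) y0 y1) (x0, y1) (x0 + n, y0),
      (0 < n -> HP (rect x0 (x0 + n) y0 y1) (x0, y0) (x0 + n, y0)) &
      (0 < n -> HP (rect x0 (x0 + n) y0 y1) (x0, y1) (x0 + n, y1))].
Proof.
have cu : forall x y0 y1, y0 <= y1 -> HP (rect x x y0 y1) (x, y0) (x, y1).
  by move=> x y0 y1 h; have := col_up x y0 (y1 - y0); rewrite subnKC.
have cd : forall x y0 y1, y0 <= y1 -> HP (rect x x y0 y1) (x, y1) (x, y0).
  by move=> x y0 y1 h; apply: HP_rev; apply: cu.
elim: n => [|n IH] x0 y0 y1 hy.
  rewrite addn0; split=> //; [exact: cu | exact: cd].
have [IBT ITB IBB ITT] := IH x0.+1 y0 y1 hy.
have E : forall p, (rect x0 x0 y0 y1 p || rect x0.+1 (x0.+1 + n) y0 y1 p) =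
                   rect x0 (x0 + n.+1) y0 y1 p by pt.
have dj : forall p, rect x0 x0 y0 y1 p -> rect x0.+1 (x0.+1 + n) y0 y1 p -> False.
  by pt.
have A1 : forall y y', sg_adj (x0, y) (x0.+1, y') = (y <= y'.+1) && (y' <= y.+1).
  by move=> y y'; rewrite sg_adjE; lia.
have F : x0.+1 + n = x0 + n.+1 by lia.
split.
- case: (posnP n) => [n0|npos].
    subst n.
    rewrite addn1; have := @zig x0 (x0.+1) y0 (y1 - y0) (or_introl erefl).
    rewrite subnKC // => h; apply: HP_ext h _; pt.
  apply: HP_extE E _; rewrite -F; apply: HP_cat (cu x0 y0 y1 hy) (ITT npos) dj _ => //.
  by rewrite A1; lia.
- case: (posnP n) => [n0|npos].
    subst n.
    have := @zig (x0.+1) x0 y0 (y1 - y0) (or_intror erefl); rewrite subnKC // => h.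
    rewrite addn1; apply: HP_ext (HP_rev h) _; pt.
  apply: HP_extE E _; rewrite -F; apply: HP_cat (cd x0 y0 y1 hy) (IBB npos) dj _ => //.
  by rewrite A1; lia.
- move=> _; apply: HP_extE E _; rewrite -F; apply: HP_cat (cu x0 y0 y1 hy) ITB dj _.
  by rewrite A1; lia.
- move=> _; apply: HP_extE E _; rewrite -F; apply: HP_cat (cd x0 y0 y1 hy) IBT dj _.
  by rewrite A1; lia.
Qed.

Lemma vfam' x0 x1 y0 y1 : x0 <= x1 -> y0 <= y1 ->
  [/\ HP (rect x0 x1 y0 y1) (x0, y0) (x1, y1),
      HP (rect x0 x1 y0 y1) (x0, y1) (x1, y0),
      (x0 < x1 -> HP (rect x0 x1 y0 y1) (x0, y0) (x1, y0)) &
      (x0 < x1 -> HP (rect x0 x1 y0 y1) (x0, y1) (x1, y1))].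
Proof.
move=> hx hy; have := vfam (x1 - x0) x0 hy; rewrite subnKC // => -[A B C D].
split=> // h; [apply: C | apply: D]; lia.
Qed.

Lemma BT x0 x1 y0 y1 : x0 <= x1 -> y0 <= y1 -> HP (rect x0 x1 y0 y1) (x0, y0) (x1, y1).
Proof. by move=> hx hy; case: (vfam' hx hy). Qed.
Lemma TB x0 x1 y0 y1 : x0 <= x1 -> y0 <= y1 -> HP (rect x0 x1 y0 y1) (x0, y1) (x1, y0).
Proof. by move=> hx hy; case: (vfam' hx hy). Qed.
Lemma BB x0 x1 y0 y1 : x0 < x1 -> y0 <= y1 -> HP (rect x0 x1 y0 y1) (x0, y0) (x1, y0).
Proof. by move=> hx hy; case: (vfam' (ltnW hx) hy) => _ _ h _; apply: h. Qed.
Lemma TT x0 x1 y0 y1 : x0 < x1 -> y0 <= y1 -> HP (rect x0 x1 y0 y1) (x0, y1) (x1, y1).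
Proof. by move=> hx hy; case: (vfam' (ltnW hx) hy) => _ _ _ h; apply: h. Qed.

Lemma hLL x0 x1 y0 y1 : x0 <= x1 -> y0 < y1 -> HP (rect x0 x1 y0 y1) (x0, y0) (x0, y1).
Proof.
move=> hx hy; have := HP_swap (BB hy hx); apply: HP_extE; pt.
Qed.
Lemma hRR x0 x1 y0 y1 : x0 <= x1 -> y0 < y1 -> HP (rect x0 x1 y0 y1) (x1, y0) (x1, y1).
Proof.
move=> hx hy; have := HP_swap (TT hy hx); apply: HP_extE; pt.
Qed.

Lemma memC m n k l c p : (p \in C_vertices m n k l c) =
  (1 <= p.1 <= m) && (1 <= p.2 <= n) && ~~ ((m - k < p.1 <= m) && (c < p.2 <= c + l)).
Proof.
case: p => x y; rewrite /C_vertices mem_filter /in_removed /= andbC; congr (_ && _).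
apply/allpairsP/idP => [[[x' y'] /= [hx hy [-> ->]]] | h].
  by move: hx hy; rewrite !mem_iota; lia.
by exists (x, y); rewrite /= !mem_iota; split => //; lia.
Qed.

Lemma uniqC m n k l c : uniq (C_vertices m n k l c).
Proof.
apply: filter_uniq; apply: allpairs_uniq; try exact: iota_uniq.
by move=> [a b] [a' b'] _ _ /= [-> ->].
Qed.

Lemma HP_cycle V a b : uniq V -> HP (fun p => p \in V) a b -> sg_adj b a ->
  (exists p1 p2 p3, [/\ uniq [:: p1; p2; p3], p1 \in V, p2 \in V & p3 \in V]) ->
  has_hamiltonian_cycle V.
Proof.
move=> uV [t [u m pt l]] ba [p1 [p2 [p3 [u3 h1 h2 h3]]]].
exists (a :: t); split=> //.
- apply: uniq_perm => // p; exact: m.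
- apply: (uniq_leq_size u3) => p; rewrite m !inE.
  by case/or3P => /eqP ->.
- by rewrite /cycle rcons_path pt l ba.
Qed.

Ltac side := first [ (case=> ? ?; unfold rect; try rewrite /pred1; rewrite /= ?xpair_eqE /=; lia)
                   | (rewrite sg_adjE; lia) ].

Lemma three m n k l c : 1 <= m - k -> 1 <= c -> 3 <= n ->
  exists p1 p2 p3, [/\ uniq [:: p1; p2; p3], p1 \in C_vertices m n k l c,
     p2 \in C_vertices m n k l c & p3 \in C_vertices m n k l c].
Proof.
move=> ha hc hn; exists (1,1), (1,2), (1,3); rewrite !memC /=; split; try lia.
Qed.

Lemma caseA m n k l c : 3 <= m - k -> 1 <= k -> 1 <= l -> 2 <= c -> c + l < n ->
  (c + l + 2 <= n \/ k = 1) ->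
  has_hamiltonian_cycle (C_vertices m n k l c).
Proof.
move=> ha hk hl hc hd hd2.
set a := m - k.
have ham : m = a + k by rewrite /a; lia.
have P1 := @TB 1 1 1 n (leqnn 1) ltac:(lia).
have P2 := @hLL 2 m 1 c ltac:(lia) ltac:(lia).
have P3 := @BT 2 a c.+1 (c + l) ltac:(lia) ltac:(lia).
have P4 : HP (rect a.+1 m (c + l).+1 n) (a.+1, (c + l).+1) (a.+1, n).
  case: hd2 => h.
    apply: hLL; lia.
  have -> : m = a.+1 by lia.
  apply: BT; lia.
have P5 := HP_rev (@TT 2 a (c + l).+1 n ltac:(lia) ltac:(lia)).
have T3 := @three m n k l c ltac:(lia) ltac:(lia) ltac:(lia).
apply: (@HP_cycle _ (1, n) (2, n) (uniqC m n k l c) _ _ T3); last by side.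
apply: HP_extE (HP_cat (HP_cat (HP_cat (HP_cat P1 P2 _ _) P3 _ _) P4 _ _) P5 _ _).
all: try side.
move=> [x y]; rewrite memC; unfold rect; rewrite /=; lia.
Qed.

Lemma caseB m n k l c : m - k = 2 -> 1 <= k -> 1 <= l -> 2 <= c -> c + l + 2 <= n ->
  has_hamiltonian_cycle (C_vertices m n k l c).
Proof.
move=> ha hk hl hc hd.
have P1 := @TB 1 1 1 n (leqnn 1) ltac:(lia).
have P2 := @hLL 2 m 1 c ltac:(lia) ltac:(lia).
have P3 := @BT 2 2 c.+1 (c + l) ltac:(lia) ltac:(lia).
have P4 := @hLL 2 m (c + l).+1 n ltac:(lia) ltac:(lia).
have T3 := @three m n k l c ltac:(lia) ltac:(lia) ltac:(lia).
apply: (@HP_cycle _ (1, n) (2, n) (uniqC m n k l c) _ _ T3); last by side.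
apply: HP_extE (HP_cat (HP_cat (HP_cat P1 P2 _ _) P3 _ _) P4 _ _).
all: try side.
move=> [x y]; rewrite memC; unfold rect; rewrite /=; lia.
Qed.

Lemma caseC m n k l c : 2 <= m - k -> k = 1 -> 1 <= l -> 1 <= c -> c + l < n ->
  (2 <= l \/ m - k = 2) ->
  has_hamiltonian_cycle (C_vertices m n k l c).
Proof.
move=> ha hk hl hc hd hl2.
set a := m - k.
have ham : m = a + k by rewrite /a; lia.
have P1 := @TB 1 1 1 n (leqnn 1) ltac:(lia).
have P2 := @BT 2 m 1 c ltac:(lia) ltac:(lia).
have P3 : HP (rect 2 a c.+1 (c + l)) (a, c.+1) (a, c + l).
  case: hl2 => h.
    apply: hRR; lia.
  rewrite -/a in h; rewrite h; apply: BT; lia.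
have P4 := HP_rev (@TB 2 m (c + l).+1 n ltac:(lia) ltac:(lia)).
have T3 := @three m n k l c ltac:(lia) ltac:(lia) ltac:(lia).
apply: (@HP_cycle _ (1, n) (2, n) (uniqC m n k l c) _ _ T3); last by side.
apply: HP_extE (HP_cat (HP_cat (HP_cat P1 P2 _ _) P3 _ _) P4 _ _).
all: try side.
move=> [x y]; rewrite memC; unfold rect; rewrite /=; lia.
Qed.

Lemma caseD m n k l c : 3 <= m - k -> k = 1 -> l = 1 -> c = 1 -> 3 <= n ->
  has_hamiltonian_cycle (C_vertices m n k l c).
Proof.
move=> ha hk hl hc hn.
set a := m - k.
have ham : m = a + k by rewrite /a; lia.
have P1 := @TB 1 1 1 n (leqnn 1) ltac:(lia).
have P2 := @BT 2 m 1 1 ltac:(lia) ltac:(lia).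
have P3 := HP1 (a, 2).
have P4 := @BT m m 3 n ltac:(lia) ltac:(lia).
have P5 := @TB a a 3 n ltac:(lia) ltac:(lia).
have P6 := HP_rev (@TB 2 a.-1 2 n ltac:(lia) ltac:(lia)).
have T3 := @three m n k l c ltac:(lia) ltac:(lia) ltac:(lia).
apply: (@HP_cycle _ (1, n) (2, n) (uniqC m n k l c) _ _ T3); last by side.
apply: HP_extE (HP_cat (HP_cat (HP_cat (HP_cat (HP_cat P1 P2 _ _) P3 _ _) P4 _ _) P5 _ _) P6 _ _).
all: try side.
move=> [x y]; rewrite memC; unfold rect; rewrite /pred1 /= xpair_eqE; lia.
Qed.

Lemma ham_rot V s w : hamiltonian_cycle V s -> w \in V ->
  exists t, hamiltonian_cycle V (w :: t).
Proof.
move=> [u p sz cy] wV.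
have ws : w \in s by rewrite (perm_mem p).
exists (drop (index w s).+1 s ++ take (index w s) s).
rewrite -(rot_index ws); split.
- by rewrite rot_uniq.
- by rewrite perm_rot.
- by rewrite size_rot.
- by rewrite rot_cycle.
Qed.

Lemma deg_ge2 V s w : hamiltonian_cycle V s -> w \in V -> 2 <= degree V w.
Proof.
move=> H wV; have [t [u p sz cy]] := ham_rot H wV.
rewrite /degree -((permP p) (sg_adj w)); clear p.
case: t u sz cy => [|x t] //= u sz cy.
case/lastP: t u sz cy => [|r y] //= u sz cy.
move: cy; rewrite /= rcons_path last_rcons => /and3P [wx _ yw].
rewrite -cats1 count_cat /= wx (sg_adj_sym w y) yw.
lia.
Qed.

Lemma side_path c x t : path sg_adj x t -> all (fun p : point => p.2 != c.+1) (x :: t) ->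
  all (fun p : point => (p.2 <= c) == (x.2 <= c)) t.
Proof.
elim: t x => [|y t IH] x //= /andP [xy pt] /and3P [hx hy ht].
have e : (y.2 <= c) = (x.2 <= c).
  move: xy hx hy; clear; case: x => x1 x2; case: y => y1 y2; rewrite sg_adjE /=; lia.
rewrite e eqxx /=.
have := IH y pt; rewrite /= hy ht => /(_ isT).
by rewrite e.
Qed.

Lemma no_cycle_a1 m n k l c : m - k = 1 -> 1 <= l -> 1 <= c -> c + l < n ->
  ~ has_hamiltonian_cycle (C_vertices m n k l c).
Proof.
move=> ha hl hc hd [s H].
set V := C_vertices m n k l c.
have vV : (1, c.+1) \in V by rewrite memC /=; lia.
have [t [u p sz cy]] := ham_rot H vV.
case: t u p sz cy => [|x t] // u p sz cy.
have memt : forall q, q \in V -> q != (1, c.+1) -> q \in x :: t.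
  by move=> q; rewrite -(perm_mem p) in_cons => /orP [->|].
have ne : forall q, q \in x :: t -> q.2 != c.+1.
  move=> q qt; have qV : q \in V by rewrite -(perm_mem p) in_cons qt orbT.
  move: u => /= /andP [vn _].
  have qv : q != (1, c.+1) by apply: contraNneq vn => <-.
  move: qV qv; rewrite memC; case: q {qt} => q1 q2 /=; rewrite xpair_eqE; lia.
have pt : path sg_adj x t.
  by move: cy; rewrite /= rcons_path => /and3P [].
have al := side_path pt (introT allP ne).
have h1 : (1, 1) \in x :: t by apply: memt; rewrite ?memC /= ?xpair_eqE; lia.
have h2 : (1, n) \in x :: t by apply: memt; rewrite ?memC /= ?xpair_eqE; lia.
have s1 : forall q, q \in x :: t -> (q.2 <= c) = (x.2 <= c).
  move=> q; rewrite in_cons => /orP [/eqP -> //|qt].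
  by move/allP: al => al; have := al q qt; move/eqP.
have := s1 _ h1; have := s1 _ h2 => /=; lia.
Qed.

Lemma deg_one V w u : uniq V -> u \in V ->
  (forall p, p \in V -> sg_adj w p = (p == u)) -> degree V w = 1.
Proof.
move=> uV uin h; rewrite /degree (eq_in_count h).
by rewrite (count_uniq_mem _ uV) uin.
Qed.

Theorem theorem4 (m n k l c d : nat)
  (hm : 2 <= m) (hn : 3 <= n) (hk : 1 <= k) (hl : 1 <= l) (hc : 1 <= c)
  (hd : d = n - l - c) (hd1 : 1 <= d) (ha : 1 <= m - k) :
  has_hamiltonian_cycle (C_vertices m n k l c) <->
  (m - k <> 1 /\
   ~ (exists w, w \in C_vertices m n k l c /\
                degree (C_vertices m n k l c) w = 1)).
Proof.
split.
- move=> [s H]; split.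
  + move=> a1; apply: (@no_cycle_a1 m n k l c a1 hl hc _ (ex_intro _ s H)); lia.
  + move=> [w [wV dw]]; have := deg_ge2 H wV; lia.
- move=> [ha1 nodeg].
  have hc2 : 2 <= c \/ k = 1.
    case: (ltnP 1 c) => h1; first by left.
    case: (ltnP 1 k) => h2; last by right; lia.
    exfalso; apply: nodeg; exists (m, 1); split; first by rewrite memC /=; lia.
    apply: (deg_one (u := (m - 1, 1))) (uniqC _ _ _ _ _) _ _.
      by rewrite memC /=; lia.
    move=> [x y]; rewrite memC sg_adjE xpair_eqE /=; lia.
  have hd2 : c + l + 2 <= n \/ k = 1.
    case: (ltnP (c + l).+1 n) => h1; first by left; lia.
    case: (ltnP 1 k) => h2; last by right; lia.
    exfalso; apply: nodeg; exists (m, n); split; first by rewrite memC /=; lia.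
    apply: (deg_one (u := (m - 1, n))) (uniqC _ _ _ _ _) _ _.
      by rewrite memC /=; lia.
    move=> [x y]; rewrite memC sg_adjE xpair_eqE /=; lia.
  have [A|nA] := boolP ((3 <= m - k) && (2 <= c)).
    apply: caseA; lia.
  case: (ltnP 2 (m - k)) => a3.
    have c1 : c = 1 by lia.
    have k1 : k = 1 by lia.
    case: (ltnP 1 l) => l2.
      apply: caseC; lia.
    apply: caseD; lia.
  case: (ltnP 1 k) => k2.
    apply: caseB; lia.
  apply: caseC; lia.
Qed.
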